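(* Let $R$ be a commutative ring. Regard $\mathrm{Ob}_{\mathcal{I}}$ and $\mathrm{Iso}_{\mathcal{I}}$ as set-valued functors on the category $\mathrm{Alg}(R)$ of unital associative $R$-algebras (by composing with the forgetful functor to non-unital algebras). Then these functors are representable, the source and target maps $\mathrm{Iso}_{\mathcal{I}}\to \mathrm{Ob}_{\mathcal{I}}$ are both submersive morphisms of representable functors, and the representable functor $\mathrm{Ob}_{\mathcal{I}}$ is also submersive (i.e. $\mathrm{Ob}_{\mathcal{I}}\to \mathrm{Spec}^{nc}R$ is submersive).
   Context: For a (possibly non-unital) associative $R$-algebra $A$, $\mathrm{Ob}_{\mathcal{I}}(A):=\{e\in A : e^2=e\}$ and $\mathrm{Iso}_{\mathcal{I}}(A):=\{(f,g)\in A\times A : fgf=f,\ gfg=g\}$; the source and target of $(f,g)$ are $gf$ and $fg$ respectively. For $A\in\mathrm{Alg}(R)$, $\mathrm{Spec}^{nc}A$ is the functor $\mathrm{Hom}_{\mathrm{Alg}(R)}(A,-)$, and a morphism $\mathrm{Spec}^{nc}B\to\mathrm{Spec}^{nc}A$ of representable functors corresponds to an algebra map $A\to B$; it is called submersive if $A\to B$ is. A morphism $f\colon A\to B$ in $\mathrm{Alg}(R)$ is formally submersive if for every surjection $C\to D$ in $\mathrm{Alg}(R)$ with nilpotent kernel, the map $\mathrm{Hom}(B,C)\to \mathrm{Hom}(B,D)\times_{\mathrm{Hom}(A,D)}\mathrm{Hom}(A,C)$ is surjective; it is l.f.p. if for every filtered system $\{C_i\}$ with colimit $C$, the map $\varinjlim_i\mathrm{Hom}(B,C_i)\to\varinjlim_i\mathrm{Hom}(A,C_i)\times_{\mathrm{Hom}(A,C)}\mathrm{Hom}(B,C)$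 is a bijection; it is submersive if it is both. *)

(* Defs.v *)
From HB Require Import structures.
From mathcomp Require Import all_boot all_order all_algebra.
Set Implicit Arguments. Unset Strict Implicit. Unset Printing Implicit Defensive.
Import GRing.Theory.
Local Open Scope ring_scope.

(* Unital associative R-algebras, possibly the zero algebra.           *)
(* An R-algebra (R commutative) is a ring A together with a unital ring *)
(* homomorphism R -> A landing in the centre of A; r *: x := str r * x. *)
Record pzAlgType (R : comPzRingType) := PzAlgType {
  alg_ring :> pzRingType;
  alg_str : R -> alg_ring;
  alg_strD : forall r s, alg_str (r + s) = alg_str r + alg_str s;
  alg_strM : forall r s, alg_str (r * s) = alg_str r * alg_str s;
  alg_str1 : alg_str 1 = 1;
  alg_strC : forall r (x : alg_ring), alg_str r * x = x * alg_str r
}.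

Definition regular_alg (R : comPzRingType) : pzAlgType R :=
  @PzAlgType R R id (fun _ _ => erefl) (fun _ _ => erefl) erefl
    (fun r x => mulrC r x).

Record algHom (R : comPzRingType) (A B : pzAlgType R) := AlgHom {
  ahfun :> A -> B;
  ahD : forall x y, ahfun (x + y) = ahfun x + ahfun y;
  ahM : forall x y, ahfun (x * y) = ahfun x * ahfun y;
  ah1 : ahfun 1 = 1;
  ahS : forall r : R, ahfun (alg_str A r) = alg_str B r
}.

Definition isIdem (R : comPzRingType) (B : pzAlgType R) (e : B) : Prop := e * e = e.
Definition isIsoI (R : comPzRingType) (B : pzAlgType R) (f g : B) : Prop :=
  f * g * f = f /\ g * f * g = g.

(* Ob_I is represented by (A, e): e is a universal element, i.e.      *)
(* Hom(A,B) -> Ob_I(B), phi |-> phi e, is a bijection for every B      *)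
(* (by Yoneda, equivalent to a natural isomorphism Spec^nc A = Ob_I).  *)
Definition represents_Ob (R : comPzRingType) (A : pzAlgType R) (e : A) : Prop :=
  isIdem e /\
  forall B : pzAlgType R,
    (forall x : B, isIdem x -> exists phi : algHom A B, phi e = x) /\
    (forall phi psi : algHom A B, phi e = psi e -> forall z, phi z = psi z).

Definition represents_Iso (R : comPzRingType) (A : pzAlgType R) (f g : A) : Prop :=
  isIsoI f g /\
  forall B : pzAlgType R,
    (forall x y : B, isIsoI x y ->
       exists phi : algHom A B, phi f = x /\ phi g = y) /\
    (forall phi psi : algHom A B, phi f = psi f -> phi g = psi g ->
       forall z, phi z = psi z).

(* The kernel of pi is a nilpotent (two-sided) ideal: I^n = 0.         *)
Definition nilpotent_kernel (R : comPzRingType) (C D : pzAlgType R)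
    (pi : algHom C D) : Prop :=
  exists n : nat, forall s : seq C, size s = n ->
    (forall x, x \in s -> pi x = 0) -> \prod_(x <- s) x = 0.

Definition formally_submersive (R : comPzRingType) (A B : pzAlgType R)
    (f : algHom A B) : Prop :=
  forall (C D : pzAlgType R) (pi : algHom C D),
    (forall d : D, exists c : C, pi c = d) ->
    nilpotent_kernel pi ->
    forall (b : algHom B D) (a : algHom A C),
      (forall x, b (f x) = pi (a x)) ->
      exists c : algHom B C,
        (forall y, pi (c y) = b y) /\ (forall x, c (f x) = a x).

Record filtered_diagram (R : comPzRingType) := FilteredDiagram {
  fd_idx : Type;
  fd_hom : fd_idx -> fd_idx -> Type;
  fd_id : forall i, fd_hom i i;
  fd_comp : forall i j k, fd_hom j k -> fd_hom i j -> fd_hom i k;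
  fd_compl : forall i j (u : fd_hom i j), fd_comp (fd_id j) u = u;
  fd_compr : forall i j (u : fd_hom i j), fd_comp u (fd_id i) = u;
  fd_compA : forall i j k l (u : fd_hom i j) (v : fd_hom j k) (w : fd_hom k l),
      fd_comp w (fd_comp v u) = fd_comp (fd_comp w v) u;
  fd_nonempty : inhabited fd_idx;
  fd_upper : forall i j, exists k, inhabited (fd_hom i k) /\ inhabited (fd_hom j k);
  fd_coeq : forall i j (u v : fd_hom i j),
      exists k, exists w : fd_hom j k, fd_comp w u = fd_comp w v;
  fd_obj : fd_idx -> pzAlgType R;
  fd_map : forall i j, fd_hom i j -> algHom (fd_obj i) (fd_obj j);
  fd_map_id : forall i x, fd_map (fd_id i) x = x;
  fd_map_comp : forall i j k (v : fd_hom j k) (u : fd_hom i j) x,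
      fd_map (fd_comp v u) x = fd_map v (fd_map u x)
}.


Arguments fd_obj {R} f _ : rename.
Arguments fd_hom {R} f _ _ : rename.
Arguments fd_map {R f i j} _ : rename.
Arguments fd_comp {R f i j k} _ _ : rename.
Arguments fd_id {R f} _ : rename.

Definition is_colimit (R : comPzRingType) (Dg : filtered_diagram R)
    (C : pzAlgType R) (iota : forall i, algHom (fd_obj Dg i) C) : Prop :=
  (forall i j (u : fd_hom Dg i j) x, iota j (fd_map u x) = iota i x) /\
  forall (E : pzAlgType R) (eps : forall i, algHom (fd_obj Dg i) E),
    (forall i j (u : fd_hom Dg i j) x, eps j (fd_map u x) = eps i x) ->
    (exists h : algHom C E, forall i x, h (iota i x) = eps i x) /\
    (forall h h' : algHom C E,
        (forall i x, h (iota i x) = eps i x) ->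
        (forall i x, h' (iota i x) = eps i x) ->
        forall z, h z = h' z).

(* f : A -> B is l.f.p.: for every filtered diagram {C_i} with colimit C,
   colim_i Hom(B,C_i) -> colim_i Hom(A,C_i) x_{Hom(A,C)} Hom(B,C)
   is a bijection.  Elements of colim_i Hom(X,C_i) are classes of pairs
   (i, x) with (i,x) ~ (j,y) iff they become equal in some C_k. *)
Definition lfp (R : comPzRingType) (A B : pzAlgType R) (f : algHom A B) : Prop :=
  forall (Dg : filtered_diagram R) (C : pzAlgType R)
         (iota : forall i, algHom (fd_obj Dg i) C),
    is_colimit iota ->
    (forall i (a : algHom A (fd_obj Dg i)) (b : algHom B C),
        (forall x, iota i (a x) = b (f x)) ->
        exists j (b' : algHom B (fd_obj Dg j)),
          (forall y, iota j (b' y) = b y) /\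
          exists k (u : fd_hom Dg j k) (v : fd_hom Dg i k),
            forall x, fd_map u (b' (f x)) = fd_map v (a x)) /\
    (forall i j (b1 : algHom B (fd_obj Dg i)) (b2 : algHom B (fd_obj Dg j)),
        (exists k (u : fd_hom Dg i k) (v : fd_hom Dg j k),
            forall x, fd_map u (b1 (f x)) = fd_map v (b2 (f x))) ->
        (forall y, iota i (b1 y) = iota j (b2 y)) ->
        exists k (u : fd_hom Dg i k) (v : fd_hom Dg j k),
          forall y, fd_map u (b1 y) = fd_map v (b2 y)).

Definition submersive (R : comPzRingType) (A B : pzAlgType R) (f : algHom A B) : Prop :=
  formally_submersive f /\ lfp f.

(* Main.v *)
Require Import Defs.
From HB Require Import structures.
From mathcomp Require Import all_boot all_order all_algebra.
From mathcomp Require Import ring.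
From mathcomp Require Import boolp.
From mathcomp Require Import finmap.
From mathcomp.multinomials Require Import monalg.
Set Implicit Arguments. Unset Strict Implicit. Unset Printing Implicit Defensive.
Import GRing.Theory.
Local Open Scope ring_scope.

(* words, stored reversed *)
Definition push (s : seq bool) (x : bool) : seq bool :=
  match s with
  | y :: z :: r => if (y != x) && (z == x) then z :: r else x :: s
  | _ => x :: s
  end.

Fixpoint irr (s : seq bool) : bool :=
  match s with
  | a :: ((b :: c :: _) as t) => ~~ ((a != b) && (c == a)) && irr t
  | _ => true
  end.

Lemma irr_cons x s : irr (x :: s) -> irr s.
Proof. by case: s => [ |b [ |c t]] //= /andP[]. Qed.

Lemma irr_push s x : irr s -> irr (push s x).
Proof.
case: s => [ |y [ |z r]] // H.
rewrite /push.
case: ifP => [_|h]; first exact: (irr_cons H).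
rewrite [irr _]/= -/(irr [:: y, z & r]) H andbT eq_sym h.
by [].
Qed.

Lemma push_irr s x : irr (x :: s) -> push s x = x :: s.
Proof.
case: s => [ |y [ |z r]] //= /andP[H _].
by rewrite eq_sym (negbTE H).
Qed.

Lemma push_head s x : exists w, push s x = x :: w.
Proof.
case: s => [ |y [ |z r]] /=; try by eexists.
case: ifP => [/andP[_ /eqP->]|_]; by eexists.
Qed.

Lemma irr_foldl s l : irr s -> irr (foldl push s l).
Proof. by elim: l s => //= x l IH s Hs; apply/IH/irr_push. Qed.

Lemma foldl_nil t : irr t -> foldl push [::] (rev t) = t.
Proof.
elim: t => // x t IH H; rewrite rev_cons -cats1 foldl_cat IH ?(irr_cons H) //=.
exact: push_irr.
Qed.

Lemma push3 w w' x y : irr (x :: w') -> w = x :: w' -> y != x ->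
  push (push w y) x = w.
Proof.
move=> Hi -> yx; case: w' Hi => [ |a r] Hi /=.
  by rewrite yx eqxx.
case: ifP => [/andP[_ /eqP ay]|h].
  subst a; rewrite /=; case: r Hi => [ |b r] Hi /=.
    by [].
  move: Hi => /= /andP[Hn _].
  have -> : (b == x) = false by apply/negbTE; apply: contra Hn => ->; rewrite eq_sym yx.
  by rewrite andbF.
by rewrite /= yx eqxx.
Qed.

Lemma keyK s t x : irr s -> irr t ->
  foldl push s (rev (push t x)) = push (foldl push s (rev t)) x.
Proof.
move=> Hs Ht.
have plain : forall t, foldl push s (rev (x :: t)) = push (foldl push s (rev t)) x.
  by move=> t'; rewrite rev_cons -cats1 foldl_cat.
case: t Ht => [ |y [ |z r]] Ht; try exact: plain.
rewrite [push [:: y, z & r] x]/push; case: ifP => [/andP[yx /eqP zx]|_]; last exact: plain.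
subst z.
rewrite !rev_cons -!cats1 !foldl_cat /=.
have [w' Hw'] := push_head (foldl push s (rev r)) x.
symmetry; apply: (push3 (w' := w')) => //.
rewrite -Hw'; apply/irr_push/irr_foldl/Hs.
Qed.

Lemma assoc_gen s t l : irr s -> irr t ->
  foldl push s (rev (foldl push t l)) = foldl push (foldl push s (rev t)) l.
Proof.
elim: l t => //= x l IH t Hs Ht.
rewrite IH //; last exact: irr_push.
by rewrite keyK.
Qed.

Lemma foldl_nil_inv s l : foldl push s l = [::] -> s = [::] /\ l = [::].
Proof.
elim: l s => //= x l IH s /IH [H _].
by have [w Hw] := push_head s x; rewrite Hw in H.
Qed.

Definition M := {s : seq bool | irr s}.
HB.instance Definition _ := [Choice of M by <:].

Definition mulM (a b : M) : M :=
  exist _ (foldl push (val a) (rev (val b))) (irr_foldl _ (valP a)).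
Definition oneM : M := exist _ [::] erefl.

Lemma mulMA : associative mulM.
Proof. by move=> a b c; apply: val_inj; rewrite /= assoc_gen ?revK //; apply: valP. Qed.
Lemma mul1M : left_id oneM mulM.
Proof. by move=> a; apply: val_inj; rewrite /= foldl_nil //; apply: valP. Qed.
Lemma mulM1 : right_id oneM mulM.
Proof. by move=> a; apply: val_inj. Qed.
Lemma unitM x y : mulM x y = oneM -> x = oneM /\ y = oneM.
Proof.
move=> /(congr1 val) /= /foldl_nil_inv [H1 H2]; split; apply: val_inj => //=.
by rewrite -(revK (val y)) H2.
Qed.

HB.instance Definition _ := Choice_isMonomialDef.Build M mulMA mul1M mulM1 unitM.

Section AlgBasics.
Variables (R : comPzRingType) (A B : pzAlgType R) (phi : algHom A B).
Lemma ah0 : phi 0 = 0.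
Proof. by apply: (@addrI _ (phi 0)); rewrite -ahD !addr0. Qed.
Lemma ahN x : phi (- x) = - phi x.
Proof. by apply: (@addrI _ (phi x)); rewrite -ahD !subrr ah0. Qed.
Lemma ahB x y : phi (x - y) = phi x - phi y.
Proof. by rewrite ahD ahN. Qed.
Lemma ah_sum (I : Type) (r : seq I) (F : I -> A) :
  phi (\sum_(i <- r) F i) = \sum_(i <- r) phi (F i).
Proof. exact: (big_morph phi (ahD phi) ah0). Qed.
Lemma ahX x n : phi (x ^+ n) = phi x ^+ n.
Proof. by elim: n => [|n IH]; rewrite ?expr0 ?ah1 // !exprS ahM IH. Qed.
End AlgBasics.

Section StrBasics.
Variables (R : comPzRingType) (B : pzAlgType R).
Lemma str0 : alg_str B 0 = 0.
Proof. by apply: (@addrI _ (alg_str B 0)); rewrite -alg_strD !addr0. Qed.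
Lemma strN r : alg_str B (- r) = - alg_str B r.
Proof. by apply: (@addrI _ (alg_str B r)); rewrite -alg_strD !subrr str0. Qed.
End StrBasics.

Definition ahcomp (R : comPzRingType) (A B C : pzAlgType R)
  (g : algHom B C) (f : algHom A B) : algHom A C.
Proof.
refine (@AlgHom R A C (fun x => g (f x)) _ _ _ _).
- by move=> x y; rewrite !ahD.
- by move=> x y; rewrite !ahM.
- by rewrite !ah1.
- by move=> r; rewrite !ahS.
Defined.

Definition ahid (R : comPzRingType) (A : pzAlgType R) : algHom A A.
Proof. by refine (@AlgHom R A A (fun x => x) _ _ _ _). Defined.

Lemma hom_reg_uniq (R : comPzRingType) (C : pzAlgType R)
  (h : algHom (regular_alg R) C) r : h r = alg_str C r.
Proof. exact: (ahS h r). Qed.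

Definition strHom (R : comPzRingType) (C : pzAlgType R) : algHom (regular_alg R) C.
Proof.
refine (@AlgHom R (regular_alg R) C (alg_str C) _ _ _ _).
- exact: alg_strD.
- exact: alg_strM.
- exact: alg_str1.
- by [].
Defined.

Definition Rnz (R : comPzRingType) (H : (1:R) != 0) : Type := R.
HB.instance Definition _ R H := GRing.ComPzRing.on (@Rnz R H).
HB.instance Definition _ R H := GRing.PzSemiRing_isNonZero.Build (@Rnz R H) H.

Section IsoAlg.
Variables (R : comPzRingType) (H : (1:R) != 0).
Local Notation K := (Rnz H).
Definition IsoT := {malg K[M]}.

Definition istr (r : R) : IsoT := (r : K)%:MP.

Lemma UU (a b : K) (k l : M) :
  << a *g k >> * << b *g l >> = << a * b *g mmul k l >> :> IsoT.
Proof. by rewrite malgM_def fgmulUU. Qed.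

Lemma istrC r (x : IsoT) : istr r * x = x * istr r.
Proof.
rewrite [x]monalgE mulr_sumr mulr_suml; apply: eq_bigr => k _.
by rewrite /istr !UU mulrC mulm1 mul1m.
Qed.

Lemma istrD r s : istr (r + s) = istr r + istr s.
Proof. by rewrite /istr monalgUD. Qed.
Lemma istrM r s : istr (r * s) = istr r * istr s.
Proof. by rewrite /istr -mpolyCM. Qed.
Lemma istr1 : istr 1 = 1.
Proof. by rewrite /istr mpolyC1E. Qed.

Definition IsoA : pzAlgType R :=
  @PzAlgType R IsoT istr istrD istrM istr1 istrC.
End IsoAlg.

Section Eval.
Variables (R : comPzRingType) (B : pzAlgType R) (x y : B).
Definition letter (c : bool) : B := if c then x else y.
Definition evs (s : seq bool) : B := \prod_(c <- rev s) letter c.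
Definition evM (k : M) : B := evs (val k).

Hypothesis Hxy : isIsoI x y.

Lemma evs_cons c s : evs (c :: s) = evs s * letter c.
Proof. by rewrite /evs rev_cons -cats1 big_cat big_seq1. Qed.

Lemma evs_push s c : evs (push s c) = evs s * letter c.
Proof.
case: s => [ |a [ |b r]]; rewrite /push ?evs_cons //.
case: ifP => [/andP[ac /eqP bc]|_]; last by rewrite !evs_cons.
subst b; rewrite !evs_cons -!mulrA; congr (_ * _).
case: Hxy => H1 H2.
by case: c a ac => [] [] //= _; rewrite mulrA.
Qed.

Lemma evs_foldl s l : evs (foldl push s l) = evs s * \prod_(c <- l) letter c.
Proof.
elim: l s => [|c l IH] s /=; first by rewrite big_nil mulr1.
by rewrite IH evs_push big_cons mulrA.
Qed.

Lemma evM_mul a b : evM (mulM a b) = evM a * evM b.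
Proof. by rewrite /evM /= evs_foldl. Qed.

Lemma evM_one : evM oneM = 1.
Proof. by rewrite /evM /evs big_nil. Qed.
End Eval.

Section IsoUniv.
Variables (R : comPzRingType) (H : (1:R) != 0) (B : pzAlgType R) (x y : B).
Hypothesis Hxy : isIsoI x y.
Local Notation K := (Rnz H).
Local Notation A := (IsoA H).

Definition phiI (g : A) : B :=
  \sum_(k <- msupp (g : IsoT H)) alg_str B ((g : IsoT H)@_k : R) * evM x y k.

Lemma phiIEw (d : {fset M}) (g : IsoT H) : (msupp g `<=` d)%fset ->
  phiI g = \sum_(k <- d) alg_str B (g@_k : R) * evM x y k.
Proof.
move=> le; rewrite /phiI (big_fset_incl _ le) //= => k _ /mcoeff_outdom ->.
by rewrite str0 mul0r.
Qed.

Lemma phiID (g1 g2 : IsoT H) : phiI (g1 + g2) = phiI g1 + phiI g2.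
Proof.
pose d := (msupp (g1 : IsoT H) `|` msupp (g2 : IsoT H) `|` msupp (g1 + g2 : IsoT H))%fset.
rewrite (@phiIEw d) ?fsubsetUr // (@phiIEw d g1); last first.
  by rewrite /d -fsetUA fsubsetUl.
rewrite (@phiIEw d g2); last by rewrite /d fsubsetU // fsubsetUr.
rewrite -big_split /=; apply: eq_bigr => k _.
by rewrite mcoeffD alg_strD mulrDl.
Qed.

Lemma phiIU (c : K) (k : M) : phiI << c *g k >> = alg_str B (c : R) * evM x y k.
Proof. by rewrite (@phiIEw _ _ msuppU_le) big_seq_fset1 mcoeffUU. Qed.

Lemma phiI0 : phiI 0 = 0.
Proof. by rewrite /phiI msupp0 big_seq_fset0. Qed.

Lemma phiI_sum (I : Type) (r : seq I) (F : I -> IsoT H) :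
  phiI (\sum_(i <- r) F i) = \sum_(i <- r) phiI (F i).
Proof. exact: (big_morph phiI phiID phiI0). Qed.

Lemma phiIM (g1 g2 : IsoT H) : phiI (g1 * g2) = phiI g1 * phiI g2.
Proof.
rewrite malgME phiI_sum [phiI g1]/phiI big_distrl /=; apply: eq_bigr => k1 _.
rewrite phiI_sum [phiI g2]/phiI big_distrr /=; apply: eq_bigr => k2 _.
rewrite phiIU alg_strM evM_mul // -!mulrA; congr (_ * _).
by rewrite !mulrA alg_strC.
Qed.

Lemma phiI1 : phiI 1 = 1.
Proof.
have -> : (1 : IsoT H) = (1 : K)%:MP by [].
by rewrite phiIU alg_str1 mul1r evM_one.
Qed.

Lemma phiIS r : phiI (alg_str A r) = alg_str B r.
Proof. by rewrite /= /istr phiIU evM_one mulr1. Qed.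

Definition phiIHom : algHom A B := @AlgHom R A B phiI phiID phiIM phiI1 phiIS.
End IsoUniv.

Section IsoRep.
Variables (R : comPzRingType) (H : (1:R) != 0).
Local Notation K := (Rnz H).
Local Notation A := (IsoA H).

Definition wl (c : bool) : M := exist _ [:: c] erefl.
Definition fI : A := << wl true >>.
Definition gI : A := << wl false >>.

Lemma evM_wl (B : pzAlgType R) (x y : B) c : evM x y (wl c) = letter x y c.
Proof. by rewrite /evM /evs /= big_seq1. Qed.

Lemma IsoA_rel : isIsoI fI gI.
Proof.
split; rewrite /fI /gI /= !UU !mulr1; congr (<< _ *g _ >>); exact: val_inj.
Qed.

Lemma word_split (c : bool) (s : seq bool) (Hs : irr (c :: s)) :
  << (exist _ (c :: s) Hs : M) >> =
  << (exist _ s (irr_cons Hs) : M) >> * << wl c >> :> IsoT H.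
Proof.
rewrite UU mulr1; congr (<< _ *g _ >>); apply: val_inj => /=.
by rewrite push_irr.
Qed.

Lemma IsoA_uniq (B : pzAlgType R) (phi psi : algHom A B) :
  phi fI = psi fI -> phi gI = psi gI -> forall z, phi z = psi z.
Proof.
move=> Hf Hg.
have Hw : forall k : M, phi (<< k >> : IsoT H) = psi (<< k >> : IsoT H).
  case=> s; elim: s => [|c s IH] Hs.
    have -> : (<< (exist _ [::] Hs : M) >> : IsoT H) = 1.
      by congr (<< _ *g _ >>); apply: val_inj.
    by rewrite !ah1.
  rewrite word_split.
  have := ahM phi (<< (exist _ s (irr_cons Hs) : M) >> : IsoT H) (<< wl c >> : IsoT H).
  have := ahM psi (<< (exist _ s (irr_cons Hs) : M) >> : IsoT H) (<< wl c >> : IsoT H).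
  move=> -> ->; rewrite IH; congr (_ * _); by case: c {Hs}.
move=> z; rewrite [z : IsoT H]monalgE.
rewrite (ah_sum phi) (ah_sum psi); apply: eq_bigr => k _.
have -> : << (z : IsoT H)@_k *g k >> = istr H ((z : IsoT H)@_k) * << k >>.
  by rewrite /istr UU mulr1 mul1m.
have := ahM phi (istr H ((z : IsoT H)@_k)) (<< k >> : IsoT H).
have := ahM psi (istr H ((z : IsoT H)@_k)) (<< k >> : IsoT H).
move=> -> ->; rewrite Hw; congr (_ * _).
by have := ahS phi ((z : IsoT H)@_k); have := ahS psi ((z : IsoT H)@_k) => /= -> ->.
Qed.

Lemma phiI_fI (B : pzAlgType R) (x y : B) (Hxy : isIsoI x y) : phiIHom H Hxy fI = x.
Proof. by rewrite /= /fI phiIU alg_str1 mul1r evM_wl. Qed.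
Lemma phiI_gI (B : pzAlgType R) (x y : B) (Hxy : isIsoI x y) : phiIHom H Hxy gI = y.
Proof. by rewrite /= /gI phiIU alg_str1 mul1r evM_wl. Qed.

Lemma IsoA_represents : represents_Iso fI gI.
Proof.
split; first exact: IsoA_rel.
move=> B; split; last exact: IsoA_uniq.
move=> x y Hxy; exists (phiIHom H Hxy); split.
- by rewrite /= /fI phiIU alg_str1 mul1r evM_wl.
- by rewrite /= /gI phiIU alg_str1 mul1r evM_wl.
Qed.
End IsoRep.

Section ObAlg.
Variable (R : comPzRingType).
Definition ObT := (R * R)%type.
Definition ostr (r : R) : ObT := (r, r).
Lemma ostrD r s : ostr (r + s) = ostr r + ostr s. Proof. by []. Qed.
Lemma ostrM r s : ostr (r * s) = ostr r * ostr s. Proof. by []. Qed.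
Lemma ostr1 : ostr 1 = 1. Proof. by []. Qed.
Lemma ostrC r (x : ObT) : ostr r * x = x * ostr r.
Proof. by case: x => a b; congr (_, _); apply: mulrC. Qed.
Definition ObA : pzAlgType R := @PzAlgType R ObT ostr ostrD ostrM ostr1 ostrC.
Definition eO : ObA := ((1 : R), (0 : R)).

Section Univ.
Variables (B : pzAlgType R) (x : B).
Hypothesis Hx : isIdem x.
Definition phiO (z : ObA) : B := alg_str B z.1 * x + alg_str B z.2 * (1 - x).
Lemma phiOD z1 z2 : phiO (z1 + z2) = phiO z1 + phiO z2.
Proof.
rewrite /phiO /= !alg_strD !mulrDl.
by rewrite -!addrA; congr (_ + _); rewrite addrCA.
Qed.
Lemma phiOM z1 z2 : phiO (z1 * z2) = phiO z1 * phiO z2.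
Proof.
rewrite /phiO /= !alg_strM.
have xx : x * x = x := Hx.
have x1 : x * (1 - x) = 0 by rewrite mulrBr mulr1 xx subrr.
have x2 : (1 - x) * x = 0 by rewrite mulrBl mul1r xx subrr.
have x3 : (1 - x) * (1 - x) = 1 - x by rewrite mulrBr mulr1 x2 subr0.
move: x1 x2 x3; set y := 1 - x => x1 x2 x3; clearbody y.
have CA r (w v : B) : w * (alg_str B r * v) = alg_str B r * (w * v).
  by rewrite mulrA -alg_strC mulrA.
rewrite mulrDl !mulrDr -!mulrA ![x * (alg_str B _ * _)]CA ![y * (alg_str B _ * _)]CA xx x1 x2 x3 !mulr0 addr0 add0r.
by rewrite !mulrA.
Qed.
Lemma phiO1 : phiO 1 = 1.
Proof. by rewrite /phiO /= alg_str1 !mul1r addrC subrK. Qed.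
Lemma phiOS r : phiO (alg_str ObA r) = alg_str B r.
Proof. by rewrite /phiO /= -mulrDr addrC subrK mulr1. Qed.
Definition phiOHom : algHom ObA B := @AlgHom R ObA B phiO phiOD phiOM phiO1 phiOS.
Lemma phiOe : phiOHom eO = x.
Proof. by rewrite /= /phiO /= alg_str1 str0 mul0r addr0 mul1r. Qed.
End Univ.

Lemma ObA_uniq (B : pzAlgType R) (phi psi : algHom ObA B) :
  phi eO = psi eO -> forall z, phi z = psi z.
Proof.
move=> He z.
have -> : z = alg_str ObA z.1 * eO + alg_str ObA z.2 * (1 - eO).
  case: z => a b; rewrite /eO /=; congr (_, _) => /=.
    by rewrite subrr mulr0 addr0 mulr1.
  by rewrite mulr0 subr0 mulr1 add0r.
have D := ahD phi; have D' := ahD psi; have M1 := ahM phi; have M2 := ahM psi.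
by rewrite D D' !M1 !M2 !ahB !ah1 !ahS He.
Qed.

Lemma eO_idem : isIdem eO.
Proof. by rewrite /isIdem /eO /=; congr (_, _); rewrite ?mulr1 ?mulr0. Qed.

Lemma ObA_represents : represents_Ob eO.
Proof.
split; first exact: eO_idem.
move=> B; split; last exact: ObA_uniq.
by move=> x Hx; exists (phiOHom Hx); apply: phiOe.
Qed.
End ObAlg.

Section Filt.
Variables (R : comPzRingType) (Dg : filtered_diagram R).
Local Notation I := (fd_idx Dg).
Local Notation hom := (fd_hom Dg).
Local Notation obj := (fd_obj Dg).

Lemma ub_ex i j : exists k (u : hom i k) (v : hom j k), True.
Proof.
by have [k [[u] [v]]] := fd_upper i j; exists k, u, v.
Qed.

Lemma coeq_ex i j (u v : hom i j) :
  exists k (w : hom j k), forall x, fd_map w (fd_map u x) = fd_map w (fd_map v x).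
Proof.
have [k [w Hw]] := fd_coeq u v; exists k, w => x.
by rewrite -!fd_map_comp Hw.
Qed.

Definition T := {i : I & (obj i : Type)}.
Definition rel (s t : T) : Prop :=
  exists k (u : hom (tag s) k) (v : hom (tag t) k),
    fd_map u (tagged s) = fd_map v (tagged t).

Lemma rel_at s t : rel s t -> forall k (u : hom (tag s) k) (v : hom (tag t) k),
  exists l (w : hom k l), fd_map w (fd_map u (tagged s)) = fd_map w (fd_map v (tagged t)).
Proof.
case=> k' [a [b Hab]] k u v.
have [m [p [q _]]] := ub_ex k k'.
have [m1 [c Hc]] := coeq_ex (fd_comp p u) (fd_comp q a).
have [m2 [c' Hc']] := coeq_ex (fd_comp c (fd_comp p v)) (fd_comp c (fd_comp q b)).
exists m2, (fd_comp c' (fd_comp c p)).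
have E1 := Hc (tagged s); have E2 := Hc' (tagged t).
rewrite !fd_map_comp in E1 E2.
by rewrite !fd_map_comp E1 Hab E2.
Qed.

Lemma rel_refl s : rel s s.
Proof. by exists (tag s), (fd_id _), (fd_id _). Qed.

Lemma rel_sym s t : rel s t -> rel t s.
Proof. by case=> k [u [v H]]; exists k, v, u. Qed.

Lemma rel_trans s t r : rel s t -> rel t r -> rel s r.
Proof.
case=> k1 [a [b Hab]] [k2 [c [d Hcd]]].
have [m [p [q _]]] := ub_ex k1 k2.
have [l [w Hw]] := coeq_ex (fd_comp p b) (fd_comp q c).
exists l, (fd_comp w (fd_comp p a)), (fd_comp w (fd_comp q d)).
have E := Hw (tagged t); rewrite !fd_map_comp in E.
by rewrite !fd_map_comp Hab E Hcd.
Qed.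

Lemma rel_map i k (u : hom i k) x :
  rel (existT _ i x) (existT _ k (fd_map u x)).
Proof. by exists k, u, (fd_id k); rewrite /= fd_map_id. Qed.

Definition Et := {P : T -> Prop | exists t, P = rel t}.
End Filt.

HB.instance Definition _ R Dg := gen_eqMixin (@Et R Dg).
HB.instance Definition _ R Dg := gen_choiceMixin (@Et R Dg).

Section Colim.
Variables (R : comPzRingType) (Dg : filtered_diagram R).
Local Notation I := (fd_idx Dg).
Local Notation hom := (fd_hom Dg).
Local Notation obj := (fd_obj Dg).
Local Notation T := (T Dg).
Local Notation rel := (@rel R Dg).
Local Notation E := (Et Dg).

Definition cls (t : T) : E := exist _ (rel t) (ex_intro _ t erefl).

Lemma cls_eq s t : cls s = cls t <-> rel s t.
Proof.
split.
  move=> /(congr1 (@proj1_sig _ _)) /= H; rewrite H; exact: rel_refl.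
move=> H; apply: eq_exist; apply: funext => r; apply: propext; split.
  by move=> H2; apply: rel_trans (rel_sym H) H2.
by move=> H2; apply: rel_trans H H2.
Qed.

Lemma clsP (P : E) : exists t, P = cls t.
Proof. by case: P => p [t Ht]; exists t; apply: eq_exist. Qed.

Definition rep (P : E) : T := proj1_sig (cid (clsP P)).
Lemma repK P : cls (rep P) = P.
Proof. by rewrite /rep; case: cid => t /= ->. Qed.
Lemma rep_rel t : rel (rep (cls t)) t.
Proof. by apply/cls_eq; rewrite repK. Qed.

Lemma ubT i j : exists p : {k : I & (hom i k * hom j k)%type}, True.
Proof. by have [k [u [v _]]] := ub_ex i j; exists (existT _ k (u, v)). Qed.
Definition ub i j := proj1_sig (cid (ubT i j)).

Definition op2 := forall k, obj k -> obj k -> obj k.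
Definition opc (op : op2) := forall i j (w : hom i j) x y,
  fd_map w (op i x y) = op j (fd_map w x) (fd_map w y).

Definition lift2 (op : op2) (s t : T) : T :=
  let p := ub (tag s) (tag t) in
  existT _ (tag p) (op _ (fd_map (tagged p).1 (tagged s)) (fd_map (tagged p).2 (tagged t))).

Lemma rel_any (op : op2) (Hop : opc op) i j i' j' k k'
  (a : obj i) (b : obj j) (a' : obj i') (b' : obj j')
  (u : hom i k) (v : hom j k) (u' : hom i' k') (v' : hom j' k') :
  rel (existT _ i a) (existT _ i' a') -> rel (existT _ j b) (existT _ j' b') ->
  rel (existT _ k (op k (fd_map u a) (fd_map v b)))
      (existT _ k' (op k' (fd_map u' a') (fd_map v' b'))).
Proof.
move=> H1 H2.
have [m [p [q _]]] := ub_ex k k'.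
have [l1 [w1 Hw1]] := rel_at H1 (fd_comp p u) (fd_comp q u').
have [l2 [w2 Hw2]] := rel_at H2 (fd_comp w1 (fd_comp p v)) (fd_comp w1 (fd_comp q v')).
exists l2, (fd_comp w2 (fd_comp w1 p)), (fd_comp w2 (fd_comp w1 q)).
rewrite /= !Hop; rewrite /= !fd_map_comp in Hw1 Hw2.
by rewrite !fd_map_comp Hw1 Hw2.
Qed.

Lemma lift2_rel op (Hop : opc op) s1 s2 t1 t2 :
  rel s1 t1 -> rel s2 t2 -> rel (lift2 op s1 s2) (lift2 op t1 t2).
Proof. by case: s1 s2 t1 t2 => [i a] [j b] [i' a'] [j' b']; apply: rel_any. Qed.

Lemma lift2_same op (Hop : opc op) k (x y : obj k) :
  rel (lift2 op (existT _ k x) (existT _ k y)) (existT _ k (op k x y)).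
Proof.
rewrite /lift2 /=; case: (ub k k) => m [u v] /=.
have [l [w Hw]] := coeq_ex u v.
exists l, w, (fd_comp w u) => /=.
by rewrite Hop -[fd_map w (fd_map v y)]Hw fd_map_comp Hop.
Qed.

Definition E2op (op : op2) (P Q : E) : E := cls (lift2 op (rep P) (rep Q)).

Lemma E2opE op (Hop : opc op) k (x y : obj k) :
  E2op op (cls (existT _ k x)) (cls (existT _ k y)) = cls (existT _ k (op k x y)).
Proof.
apply/cls_eq; apply: rel_trans (lift2_same Hop x y).
by apply: lift2_rel => //; apply: rep_rel.
Qed.

Definition E1op (op : forall k, obj k -> obj k) (P : E) : E :=
  cls (existT _ (tag (rep P)) (op _ (tagged (rep P)))).

Lemma E1opE (op : forall k, obj k -> obj k)
  (Hop : forall i j (w : hom i j) x, fd_map w (op i x) = op j (fd_map w x)) k (x : obj k) :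
  E1op op (cls (existT _ k x)) = cls (existT _ k (op k x)).
Proof.
apply/cls_eq; have := rep_rel (existT _ k x).
case: (rep _) => i a [m [u [v H]]]; exists m, u, v => /=.
by rewrite !Hop H.
Qed.

Lemma i0_ex : exists i : I, True.
Proof. by case: (fd_nonempty Dg) => i; exists i. Qed.
Definition i0 : I := proj1_sig (cid i0_ex).

Lemma cst_eq (c : forall k, obj k) (Hc : forall i j (w : hom i j), fd_map w (c i) = c j) k k' :
  cls (existT _ k (c k)) = cls (existT _ k' (c k')).
Proof.
apply/cls_eq; have [m [u [v _]]] := ub_ex k k'.
by exists m, u, v; rewrite /= !Hc.
Qed.

Lemma common2 (P Q : E) : exists k (x y : obj k), P = cls (existT _ k x) /\ Q = cls (existT _ k y).
Proof.
have [[i a] ->] := clsP P; have [[j b] ->] := clsP Q.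
have [k [u [v _]]] := ub_ex i j.
exists k, (fd_map u a), (fd_map v b); split; apply/cls_eq; exact: rel_map.
Qed.

Lemma common3 (P Q S : E) : exists k (x y z : obj k),
  [/\ P = cls (existT _ k x), Q = cls (existT _ k y) & S = cls (existT _ k z)].
Proof.
have [k [x [y [-> ->]]]] := common2 P Q.
have [[j c] ->] := clsP S.
have [m [u [v _]]] := ub_ex k j.
exists m, (fd_map u x), (fd_map u y), (fd_map v c); split; apply/cls_eq;
  apply: rel_trans (rel_map _ _) _; exact: rel_refl.
Qed.

Local Notation cl k x := (cls (existT _ k x)).

Definition addE := E2op (fun k (a b : obj k) => a + b).
Definition mulE := E2op (fun k (a b : obj k) => a * b).
Definition oppE := E1op (fun k (a : obj k) => - a).
Definition zeroE : E := cl i0 (0 : obj i0).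
Definition oneE : E := cl i0 (1 : obj i0).
Definition strE (r : R) : E := cl i0 (alg_str (obj i0) r).

Lemma addEk k (x y : obj k) : addE (cl k x) (cl k y) = cl k (x + y).
Proof. by apply: E2opE => i j w a b; rewrite ahD. Qed.
Lemma mulEk k (x y : obj k) : mulE (cl k x) (cl k y) = cl k (x * y).
Proof. by apply: E2opE => i j w a b; rewrite ahM. Qed.
Lemma oppEk k (x : obj k) : oppE (cl k x) = cl k (- x).
Proof. by apply: E1opE => i j w a; rewrite ahN. Qed.
Lemma zeroEk k : zeroE = cl k (0 : obj k).
Proof. by apply: (cst_eq (c := fun k => (0 : obj k))) => i j w; rewrite ah0. Qed.
Lemma oneEk k : oneE = cl k (1 : obj k).
Proof. by apply: (cst_eq (c := fun k => (1 : obj k))) => i j w; rewrite ah1. Qed.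
Lemma strEk r k : strE r = cl k (alg_str (obj k) r).
Proof. by apply: (cst_eq (c := fun k => alg_str (obj k) r)) => i j w; rewrite ahS. Qed.

Lemma E_ind3 (Pr : E -> E -> E -> Prop) :
  (forall k (x y z : obj k), Pr (cl k x) (cl k y) (cl k z)) -> forall P Q S, Pr P Q S.
Proof. by move=> H P Q S; have [k [x [y [z [-> -> ->]]]]] := common3 P Q S. Qed.

Lemma E_ind1 (Pr : E -> Prop) :
  (forall k (x : obj k), Pr (cl k x)) -> forall P, Pr P.
Proof. by move=> H P; have [[k x] ->] := clsP P. Qed.
Lemma E_ind2 (Pr : E -> E -> Prop) :
  (forall k (x y : obj k), Pr (cl k x) (cl k y)) -> forall P Q, Pr P Q.
Proof. by move=> H P Q; have [k [x [y [-> ->]]]] := common2 P Q. Qed.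

Lemma addEA : associative addE.
Proof. by apply: E_ind3 => k x y z; rewrite !addEk addrA. Qed.
Lemma addEC : commutative addE.
Proof. by apply: E_ind2 => k x y; rewrite !addEk addrC. Qed.
Lemma add0E : left_id zeroE addE.
Proof. by apply: E_ind1 => k x; rewrite (zeroEk k) addEk add0r. Qed.
Lemma addNE : left_inverse zeroE oppE addE.
Proof. by apply: E_ind1 => k x; rewrite oppEk addEk addNr (zeroEk k). Qed.

HB.instance Definition _ := GRing.isZmodule.Build E addEA addEC add0E addNE.

Lemma mulEA : associative mulE.
Proof. by apply: E_ind3 => k x y z; rewrite !mulEk mulrA. Qed.
Lemma mul1E : left_id oneE mulE.
Proof. by apply: E_ind1 => k x; rewrite (oneEk k) mulEk mul1r. Qed.
Lemma mulE1 : right_id oneE mulE.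
Proof. by apply: E_ind1 => k x; rewrite (oneEk k) mulEk mulr1. Qed.
Lemma mulEDl : left_distributive mulE addE.
Proof. by apply: E_ind3 => k x y z; rewrite !addEk !mulEk mulrDl addEk. Qed.
Lemma mulEDr : right_distributive mulE addE.
Proof. by apply: E_ind3 => k x y z; rewrite !addEk !mulEk mulrDr addEk. Qed.

HB.instance Definition _ := GRing.Zmodule_isPzRing.Build E mulEA mul1E mulE1 mulEDl mulEDr.

Lemma strED r s : strE (r + s) = strE r + strE s.
Proof. by rewrite !(strEk _ i0) alg_strD -addEk. Qed.
Lemma strEM r s : strE (r * s) = strE r * strE s.
Proof. by rewrite !(strEk _ i0) alg_strM -mulEk. Qed.
Lemma strE1 : strE 1 = 1.
Proof. by rewrite (strEk _ i0) alg_str1. Qed.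
Lemma strEC r (P : E) : strE r * P = P * strE r.
Proof.
move: P; apply: E_ind1 => k x.
change (mulE (strE r) (cl k x) = mulE (cl k x) (strE r)).
by rewrite (strEk _ k) !mulEk alg_strC.
Qed.

Definition EA : pzAlgType R := @PzAlgType R E strE strED strEM strE1 strEC.
End Colim.

Section ColimFacts.
Variables (R : comPzRingType) (Dg : filtered_diagram R).
Local Notation I := (fd_idx Dg).
Local Notation hom := (fd_hom Dg).
Local Notation obj := (fd_obj Dg).
Local Notation cl k x := (@cls R Dg (existT _ k x)).
Local Notation EA := (EA Dg).

Definition eps_fun i (x : obj i) : EA := cl i x.
Lemma epsD i (x y : obj i) : eps_fun (x + y) = eps_fun x + eps_fun y.
Proof. by rewrite /eps_fun -addEk. Qed.
Lemma epsM i (x y : obj i) : eps_fun (x * y) = eps_fun x * eps_fun y.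
Proof. by rewrite /eps_fun -mulEk. Qed.
Lemma eps1 i : eps_fun (1 : obj i) = 1.
Proof. by rewrite /eps_fun -oneEk. Qed.
Lemma epsS i r : eps_fun (alg_str (obj i) r) = alg_str EA r.
Proof. by rewrite /eps_fun /= (strEk _ i). Qed.
Definition eps i : algHom (obj i) EA := AlgHom (@epsD i) (@epsM i) (@eps1 i) (@epsS i).

Lemma eps_coc i j (u : hom i j) x : eps j (fd_map u x) = eps i x.
Proof. by apply/cls_eq/rel_sym/rel_map. Qed.

Variables (C : pzAlgType R) (iota : forall i, algHom (obj i) C).
Hypothesis Hcol : is_colimit iota.

Lemma iota_rel s t : rel s t -> iota (tag s) (tagged s) = iota (tag t) (tagged t).
Proof.
case=> k [u [v H]]; have [Hc _] := Hcol.
by rewrite -(Hc _ _ u) H Hc.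
Qed.

Definition gfun (P : EA) : C := iota (tag (rep P)) (tagged (rep P)).
Lemma gfunE k x : gfun (cl k x) = iota k x.
Proof. exact: (iota_rel (rep_rel (existT _ k x))). Qed.

Lemma gD (P Q : EA) : gfun (P + Q) = gfun P + gfun Q.
Proof.
move: P Q; apply: E_ind2 => k x y.
change (gfun (addE (cl k x) (cl k y)) = gfun (cl k x) + gfun (cl k y)).
by rewrite addEk !gfunE ahD.
Qed.
Lemma gM (P Q : EA) : gfun (P * Q) = gfun P * gfun Q.
Proof.
move: P Q; apply: E_ind2 => k x y.
change (gfun (mulE (cl k x) (cl k y)) = gfun (cl k x) * gfun (cl k y)).
by rewrite mulEk !gfunE ahM.
Qed.
Lemma g1 : gfun 1 = 1.
Proof. by change (gfun (oneE Dg) = 1); rewrite /oneE gfunE ah1. Qed.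
Lemma gS r : gfun (alg_str EA r) = alg_str C r.
Proof. by change (gfun (strE Dg r) = alg_str C r); rewrite /strE gfunE ahS. Qed.
Definition gHom : algHom EA C := AlgHom gD gM g1 gS.

Lemma colim_elem (z : C) : exists i (x : obj i), iota i x = z.
Proof.
have [Hc Hu] := Hcol.
have [[h Hh] _] := Hu EA eps eps_coc.
have Hid := (Hu C iota Hc).2 (ahcomp gHom h) (ahid C).
have Hz : gfun (h z) = z.
  apply: (Hid _ _ z) => // i x /=.
  by rewrite Hh /= /eps_fun gfunE.
have [[i x] Ht] := clsP (h z).
by exists i, x; rewrite -Hz Ht gfunE.
Qed.

Lemma colim_eq i j (x : obj i) (y : obj j) : iota i x = iota j y ->
  exists k (u : hom i k) (v : hom j k), fd_map u x = fd_map v y.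
Proof.
move=> H; have [Hc Hu] := Hcol.
have [[h Hh] _] := Hu EA eps eps_coc.
have := congr1 h H; rewrite !Hh /= /eps_fun => /cls_eq.
by [].
Qed.
End ColimFacts.

Definition nzT (C : pzRingType) (H : (1:C) != 0) : Type := C.
HB.instance Definition _ C H := GRing.PzRing.on (@nzT C H).
HB.instance Definition _ C H := GRing.PzSemiRing_isNonZero.Build (@nzT C H) H.

Lemma cubic0 (C : nzRingType) (a : C) :
  (a * a *+ 3 - a * a * a *+ 2) * (a * a *+ 3 - a * a * a *+ 2) - (a * a *+ 3 - a * a * a *+ 2)
  = (a * a - a) * ((a * a - a) * ((a * a - a) *+ 4 - 3)).
Proof.
have cu : commr_rmorph (@intmul C 1) a.
  by move=> z; rewrite /GRing.comm mulrzl mulrzr.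
have key : forall p : {poly int}, let p' := p * p *+ 3 - p * p * p *+ 2 in
   p' * p' - p' = (p * p - p) * ((p * p - p) * ((p * p - p) *+ 4 - 3)).
  by move=> p /=; ring.
have := congr1 (horner_morph cu) (key 'X) => /=.
by rewrite !(rmorphB, rmorphM, rmorphMn, rmorph1) /= !horner_morphX.
Qed.

Lemma cubic (C : pzRingType) (a : C) :
  (a * a *+ 3 - a * a * a *+ 2) * (a * a *+ 3 - a * a * a *+ 2) - (a * a *+ 3 - a * a * a *+ 2)
  = (a * a - a) * ((a * a - a) * ((a * a - a) *+ 4 - 3)).
Proof.
case: (eqVneq (1 : C) 0) => [H01|H].
  by rewrite -[LHS]mulr1 -[RHS]mulr1 H01 !mulr0.
exact (@cubic0 (@nzT C H) a).
Qed.

Lemma prod_nseq (C : pzRingType) (m : C) n : \prod_(x <- nseq n m) x = m ^+ n.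
Proof. by elim: n => [|n IH]; rewrite ?big_nil ?expr0 // big_cons IH exprS. Qed.

Section Nil.
Variables (R : comPzRingType) (C D : pzAlgType R) (pi : algHom C D).

Lemma ahMn x k : pi (x *+ k) = pi x *+ k.
Proof. by elim: k => [|k IH]; rewrite ?mulr0n ?ah0 // !mulrS ahD IH. Qed.

Lemma nil_pow n : (forall s : seq C, size s = n ->
    (forall x, x \in s -> pi x = 0) -> \prod_(x <- s) x = 0) ->
  forall m, pi m = 0 -> m ^+ n = 0.
Proof.
move=> Hn m Hm; rewrite -prod_nseq; apply: Hn; first by rewrite size_nseq.
by move=> x /nseqP [-> _].
Qed.

Lemma lift_idem : (forall d : D, exists c : C, pi c = d) -> nilpotent_kernel pi ->
  forall eb : D, isIdem eb -> exists e : C, isIdem e /\ pi e = eb.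
Proof.
move=> Hs [n Hn] eb He; have [c0 Hc0] := Hs eb.
have He' : eb * eb = eb := He.
pose F (a : C) := a * a *+ 3 - a * a * a *+ 2.
have inv : forall k, pi (iter k F c0) = eb /\ exists s : seq C, [/\ size s = k.+1,
    (forall x, x \in s -> pi x = 0) & iter k F c0 * iter k F c0 - iter k F c0 = \prod_(x <- s) x].
  elim=> [|k [IH1 [s [Hsz Hker Hprod]]]] /=.
    split => //; exists [:: c0 * c0 - c0]; split => //.
      by move=> x; rewrite inE => /eqP ->; rewrite ahB ahM Hc0 He' subrr.
    by rewrite big_seq1.
  set a := iter k F c0 in IH1 Hprod *.
  split.
    rewrite /F ahB !ahMn !ahM IH1 !He'.
    by rewrite mulrSr [_ + eb]addrC addrK.
  have Hd : pi (a * a - a) = 0 by rewrite ahB ahM IH1 He' subrr.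
  exists (rcons s ((a * a - a) * ((a * a - a) *+ 4 - 3))); split.
  - by rewrite size_rcons Hsz.
  - move=> x; rewrite mem_rcons inE => /orP [/eqP ->|/Hker //].
    by rewrite ahM Hd mul0r.
  - by rewrite /F cubic -cats1 big_cat big_seq1 /= Hprod.
have [H1 [s [Hsz Hker Hprod]]] := inv n.
exists (iter n F c0); split => //.
apply/eqP; rewrite -subr_eq0; apply/eqP; rewrite Hprod.
rewrite -(cat_take_drop n s) big_cat /= Hn ?mul0r //.
  by rewrite size_take Hsz ltnSn.
by move=> x /mem_take /Hker.
Qed.
End Nil.

Section Corner.
Variables (C : pzRingType) (eps m : C) (N : nat).
Hypotheses (He : eps * eps = eps) (Hl : eps * m = m) (Hr : m * eps = m) (Hm : m ^+ N = 0).
Definition cw := eps * \sum_(k < N) m ^+ k.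

Lemma cS1 : (1 - m) * \sum_(k < N) m ^+ k = 1.
Proof.
have := subrX1 m N; rewrite Hm sub0r => H.
by rewrite -opprB mulNr -H opprK.
Qed.

Lemma cSc : GRing.comm (1 - m) (\sum_(k < N) m ^+ k).
Proof.
apply: commr_sum => k _; apply: commrX; apply: commr_sym.
by apply: commrB; [exact: commr1 | exact: commr_refl].
Qed.

Lemma cS2 : (\sum_(k < N) m ^+ k) * (1 - m) = 1.
Proof. by rewrite -cSc cS1. Qed.

Lemma ceps : eps - m = eps * (1 - m).
Proof. by rewrite mulrBr mulr1 Hl. Qed.
Lemma ceps' : eps - m = (1 - m) * eps.
Proof. by rewrite mulrBl mul1r Hr. Qed.

Lemma cSe : GRing.comm eps (\sum_(k < N) m ^+ k).
Proof.
apply: commr_sum => k _; apply: commrX.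
by rewrite /GRing.comm Hl Hr.
Qed.

Lemma cw_l : cw * (eps - m) = eps.
Proof. by rewrite /cw ceps' -mulrA (mulrA (\sum_(k < N) m ^+ k)) cS2 mul1r He. Qed.
Lemma cw_r : (eps - m) * cw = eps.
Proof.
rewrite /cw mulrA (_ : (eps - m) * eps = eps - m); last by rewrite mulrBl He Hr.
by rewrite ceps -mulrA cS1 mulr1.
Qed.
Lemma cw_el : eps * cw = cw.
Proof. by rewrite /cw mulrA He. Qed.
Lemma cw_er : cw * eps = cw.
Proof. by rewrite /cw -mulrA -cSe mulrA He. Qed.
End Corner.

Lemma pi_cw (R : comPzRingType) (C D : pzAlgType R) (pi : algHom C D) (eps m : C) n :
  pi m = 0 -> pi (cw eps m n.+1) = pi eps.
Proof.
move=> Hm; rewrite /cw ahM ah_sum big_ord_recl /= expr0 ah1.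
rewrite big1 ?addr0 ?mulr1 // => i _.
by rewrite ahX Hm exprS mul0r.
Qed.

Section FS.
Variables (R : comPzRingType) (H : (1:R) != 0).
Local Notation AO := (ObA R).
Local Notation AI := (IsoA H).
Local Notation e := (eO R).
Local Notation f := (fI H).
Local Notation g := (gI H).

Lemma fs_s (s : algHom AO AI) : s e = g * f -> formally_submersive s.
Proof.
move=> Hs C D pi Hsurj Hnil b a Hba.
have [n Hn] := Hnil.
pose eps := a e.
have He : eps * eps = eps by rewrite /eps -ahM eO_idem.
have [Hf Hg] := IsoA_rel H.
pose X := b f; pose Y := b g.
have HYX : Y * X = pi eps by rewrite /X /Y -ahM -Hs Hba.
have HX : X * Y * X = X by rewrite /X /Y -!ahM Hf.
have HY : Y * X * Y = Y by rewrite /X /Y -!ahM Hg.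
have Hpe : pi eps * pi eps = pi eps by rewrite -ahM He.
have [x0 Hx0] := Hsurj X; have [y0 Hy0] := Hsurj Y.
have [x1 Ex1] : {x1 | x1 = x0 * eps} by eexists.
have [y1 Ey1] : {y1 | y1 = eps * y0} by eexists.
have [m Em] : {m | m = eps - y1 * x1} by eexists.
have Hyx : pi (y1 * x1) = pi eps.
  rewrite Ex1 Ey1 !ahM Hx0 Hy0 -HYX !mulrA -(mulrA _ Y X) -!(mulrA (Y * X)) !HYX.
  by rewrite !mulrA !Hpe.
have Hm0 : pi m = 0 by rewrite Em ahB Hyx subrr.
have Hml : eps * m = m by rewrite Em mulrBr He Ey1 !mulrA He.
have Hmr : m * eps = m by rewrite Em mulrBl He Ex1 -!mulrA He.
have Hmn : m ^+ n.+1 = 0 by rewrite exprS (nil_pow Hn Hm0) mulr0.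
have [w Ew] : {w | w = cw eps m n.+1} by eexists.
have wl : w * (eps - m) = eps by rewrite Ew cw_l.
have wel : eps * w = w by rewrite Ew cw_el.
have y1x1 : y1 * x1 = eps - m by rewrite Em opprB addrC subrK.
have x1e : x1 * eps = x1 by rewrite Ex1 -mulrA He.
have Hxy : isIsoI x1 (w * y1).
  split.
    by rewrite -!mulrA y1x1 wl x1e.
  by rewrite -!mulrA [y1 * (x1 * _)]mulrA y1x1 mulrA wl mulrA wel.
have pf := phiI_fI H Hxy; have pg := phiI_gI H Hxy; simpl in pf, pg.
exists (phiIHom H Hxy); split.
  apply: (IsoA_uniq (phi := ahcomp pi (phiIHom H Hxy)) (psi := b)) => /=; rewrite ?pf ?pg.
    by rewrite Ex1 ahM Hx0 -HYX mulrA HX.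
  rewrite ahM Ew pi_cw // Ey1 ahM Hy0 -HYX.
  by rewrite HY HY.
apply: (ObA_uniq (phi := ahcomp (phiIHom H Hxy) s) (psi := a)).
change (phiIHom H Hxy (s e) = a e).
by rewrite Hs (ahM (phiIHom H Hxy)) phiI_fI phiI_gI -mulrA y1x1 wl.
Qed.

Lemma fs_t (t : algHom AO AI) : t e = f * g -> formally_submersive t.
Proof.
move=> Ht C D pi Hsurj Hnil b a Hba.
have [n Hn] := Hnil.
pose eps := a e.
have He : eps * eps = eps by rewrite /eps -ahM eO_idem.
have [Hf Hg] := IsoA_rel H.
pose X := b f; pose Y := b g.
have HXY : X * Y = pi eps by rewrite /X /Y -ahM -Ht Hba.
have HX : X * Y * X = X by rewrite /X /Y -!ahM Hf.
have HY : Y * X * Y = Y by rewrite /X /Y -!ahM Hg.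
have Hpe : pi eps * pi eps = pi eps by rewrite -ahM He.
have [x0 Hx0] := Hsurj X; have [y0 Hy0] := Hsurj Y.
have [x1 Ex1] : {x1 | x1 = eps * x0} by eexists.
have [y1 Ey1] : {y1 | y1 = y0 * eps} by eexists.
have [m Em] : {m | m = eps - x1 * y1} by eexists.
have Hxy1 : pi (x1 * y1) = pi eps.
  rewrite Ex1 Ey1 !ahM Hx0 Hy0 -HXY !mulrA -(mulrA _ X Y) -!(mulrA (X * Y)) !HXY.
  by rewrite !mulrA !Hpe.
have Hm0 : pi m = 0 by rewrite Em ahB Hxy1 subrr.
have Hml : eps * m = m by rewrite Em mulrBr He Ex1 !mulrA He.
have Hmr : m * eps = m by rewrite Em mulrBl He Ey1 -!mulrA He.
have Hmn : m ^+ n.+1 = 0 by rewrite exprS (nil_pow Hn Hm0) mulr0.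
have [w Ew] : {w | w = cw eps m n.+1} by eexists.
have wr : (eps - m) * w = eps by rewrite Ew cw_r.
have wer : w * eps = w by rewrite Ew cw_er.
have x1y1 : x1 * y1 = eps - m by rewrite Em opprB addrC subrK.
have ex1 : eps * x1 = x1 by rewrite Ex1 mulrA He.
have Hxy : isIsoI x1 (y1 * w).
  split.
    by rewrite mulrA x1y1 wr ex1.
  by rewrite -!mulrA (mulrA x1) x1y1 wr wer.
have pf := phiI_fI H Hxy; have pg := phiI_gI H Hxy; simpl in pf, pg.
exists (phiIHom H Hxy); split.
  apply: (IsoA_uniq (phi := ahcomp pi (phiIHom H Hxy)) (psi := b)) => /=; rewrite ?pf ?pg.
    by rewrite Ex1 ahM Hx0 -HXY HX.
  rewrite ahM Ew pi_cw // Ey1 ahM Hy0 -HXY.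
  by rewrite !mulrA HY HY.
apply: (ObA_uniq (phi := ahcomp (phiIHom H Hxy) t) (psi := a)).
change (phiIHom H Hxy (t e) = a e).
by rewrite Ht (ahM (phiIHom H Hxy)) phiI_fI phiI_gI mulrA x1y1 wr.
Qed.
End FS.

Lemma fs_u (R : comPzRingType) (u : algHom (regular_alg R) (ObA R)) : formally_submersive u.
Proof.
move=> C D pi Hsurj Hnil b a Hba.
have Heb : isIdem (b (eO R)) by rewrite /isIdem -ahM eO_idem.
have [e' [He' Hpe']] := lift_idem Hsurj Hnil Heb.
exists (phiOHom He'); split.
  apply: (ObA_uniq (phi := ahcomp pi (phiOHom He')) (psi := b)).
  by change (pi (phiOHom He' (eO R)) = b (eO R)); rewrite phiOe.
move=> x.
have := hom_reg_uniq (ahcomp (phiOHom He') u) x; have := hom_reg_uniq a x.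
by move=> -> /= ->.
Qed.

Section Stage.
Variables (R : comPzRingType) (Dg : filtered_diagram R) (C : pzAlgType R)
  (iota : forall i, algHom (fd_obj Dg i) C).
Hypothesis Hcol : is_colimit iota.
Local Notation hom := (fd_hom Dg).
Local Notation obj := (fd_obj Dg).

Lemma coc i j (u : hom i j) x : iota j (fd_map u x) = iota i x.
Proof. by have [H _] := Hcol; apply: H. Qed.

Lemma eq_stage1 m (p q : obj m) : iota m p = iota m q ->
  exists l (w : hom m l), fd_map w p = fd_map w q.
Proof.
move=> /(colim_eq Hcol) Hr.
have [l [w Hw]] := @rel_at R Dg (existT _ m p) (existT _ m q) Hr m (fd_id m) (fd_id m).
by exists l, w; rewrite /= !fd_map_id in Hw.
Qed.

Lemma eq_stage3 m (p1 q1 p2 q2 p3 q3 : obj m) :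
  iota m p1 = iota m q1 -> iota m p2 = iota m q2 -> iota m p3 = iota m q3 ->
  exists l (w : hom m l), [/\ fd_map w p1 = fd_map w q1,
     fd_map w p2 = fd_map w q2 & fd_map w p3 = fd_map w q3].
Proof.
move=> /eq_stage1 [l1 [w1 E1]] H2 H3.
have /eq_stage1 [l2 [w2 E2]] : iota l1 (fd_map w1 p2) = iota l1 (fd_map w1 q2).
  by rewrite !coc.
have /eq_stage1 [l3 [w3 E3]] : iota l2 (fd_map w2 (fd_map w1 p3)) = iota l2 (fd_map w2 (fd_map w1 q3)).
  by rewrite !coc.
exists l3, (fd_comp w3 (fd_comp w2 w1)); split; rewrite !fd_map_comp ?E1 ?E2 ?E3 //.
Qed.
End Stage.

Section LFP.
Variables (R : comPzRingType) (H : (1:R) != 0).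
Local Notation AO := (ObA R).
Local Notation AI := (IsoA H).
Local Notation e := (eO R).
Local Notation f := (fI H).
Local Notation g := (gI H).

Lemma lfp_iso (c : bool) (s : algHom AO AI) :
  s e = (if c then f * g else g * f) -> lfp s.
Proof.
move=> Hs Dg C iota Hcol; split.
  move=> i a b Hab.
  have [Hf Hg] := IsoA_rel H.
  have [j1 [x1 Hx1]] := colim_elem Hcol (b f).
  have [j2 [y1 Hy1]] := colim_elem Hcol (b g).
  have [m1 [p0 [p1 _]]] := ub_ex i j1.
  have [m [q1 [q2 _]]] := ub_ex m1 j2.
  pose x2 := fd_map (fd_comp q1 p1) x1.
  pose y2 := fd_map q2 y1.
  pose e2 := fd_map (fd_comp q1 p0) (a e).
  have Ix2 : iota m x2 = b f by rewrite /x2 (coc Hcol).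
  have Iy2 : iota m y2 = b g by rewrite /y2 (coc Hcol).
  have Ie2 : iota m e2 = iota i (a e) by rewrite /e2 (coc Hcol).
  have H1 : iota m (x2 * y2 * x2) = iota m x2 by rewrite !ahM Ix2 Iy2 -!ahM Hf.
  have H2 : iota m (y2 * x2 * y2) = iota m y2 by rewrite !ahM Ix2 Iy2 -!ahM Hg.
  have H3 : iota m (if c then x2 * y2 else y2 * x2) = iota m e2.
    by rewrite Ie2 Hab Hs; case: (c); rewrite ahM Ix2 Iy2 -ahM.
  have [l [w [W1 W2 W3]]] := eq_stage3 Hcol H1 H2 H3.
  pose x3 := fd_map w x2; pose y3 := fd_map w y2.
  have Hxy : isIsoI x3 y3 by split; rewrite /x3 /y3 -!ahM ?W1 ?W2.
  have pf := phiI_fI H Hxy; have pg := phiI_gI H Hxy; simpl in pf, pg.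
  exists l, (phiIHom H Hxy); split.
    apply: (IsoA_uniq (phi := ahcomp (iota l) (phiIHom H Hxy)) (psi := b)) => /=; rewrite ?pf ?pg.
      by rewrite /x3 (coc Hcol).
    by rewrite /y3 (coc Hcol).
  exists l, (fd_id l), (fd_comp w (fd_comp q1 p0)) => x.
  rewrite fd_map_id.
  apply: (ObA_uniq (phi := ahcomp (phiIHom H Hxy) s) (psi := ahcomp (fd_map (fd_comp w (fd_comp q1 p0))) a)).
  change (phiIHom H Hxy (s e) = fd_map (fd_comp w (fd_comp q1 p0)) (a e)).
  rewrite fd_map_comp -/e2 -W3 Hs.
  by move: W3; case: (c) => W3; rewrite (ahM (phiIHom H Hxy)) phiI_fI phiI_gI ahM.
move=> i j b1 b2 _ Heq.
have [k [u [v Hk]]] := colim_eq Hcol (Heq f).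
have /(eq_stage1 Hcol) [l [w Hw]] : iota k (fd_map u (b1 g)) = iota k (fd_map v (b2 g)).
  by rewrite !(coc Hcol) Heq.
exists l, (fd_comp w u), (fd_comp w v).
apply: (IsoA_uniq (phi := ahcomp (fd_map (fd_comp w u)) b1) (psi := ahcomp (fd_map (fd_comp w v)) b2)).
  by rewrite /= !fd_map_comp Hk.
by rewrite /= !fd_map_comp Hw.
Qed.

Lemma lfp_u (u : algHom (regular_alg R) AO) : lfp u.
Proof.
move=> Dg C iota Hcol; split.
  move=> i a b Hab.
  have [j [p Hp]] := colim_elem Hcol (b e).
  have [m [p0 [p1 _]]] := ub_ex i j.
  pose p2 := fd_map p1 p.
  have Ip2 : iota m p2 = b e by rewrite /p2 (coc Hcol).
  have /(eq_stage1 Hcol) [l [w Hw]] : iota m (p2 * p2) = iota m p2.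
    by rewrite ahM Ip2 -ahM eO_idem.
  have Hp3 : isIdem (fd_map w p2) by rewrite /isIdem -ahM Hw.
  exists l, (phiOHom Hp3); split.
    apply: (ObA_uniq (phi := ahcomp (iota l) (phiOHom Hp3)) (psi := b)).
    by change (iota l (phiOHom Hp3 e) = b e); rewrite phiOe (coc Hcol).
  exists l, (fd_id l), (fd_comp w p0) => x.
  rewrite fd_map_id.
  have := hom_reg_uniq (ahcomp (phiOHom Hp3) u) x.
  have := hom_reg_uniq (ahcomp (fd_map (fd_comp w p0)) a) x.
  by move=> /= -> ->.
move=> i j b1 b2 _ Heq.
have [k [v1 [v2 Hk]]] := colim_eq Hcol (Heq e).
exists k, v1, v2.
by apply: (ObA_uniq (phi := ahcomp (fd_map v1) b1) (psi := ahcomp (fd_map v2) b2)).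
Qed.
End LFP.

Section Triv.
Variables (R : comPzRingType) (H0 : (1 : R) = 0).

Lemma triv_all (B : pzAlgType R) (z : B) : z = 0.
Proof. by rewrite -[z]mulr1 -(alg_str1 B) H0 str0 mulr0. Qed.

Lemma triv_iso : represents_Iso (0 : regular_alg R) 0.
Proof.
split; first by split; rewrite !mul0r.
move=> B; split.
  move=> x y _; exists (strHom B); split; rewrite /= str0; symmetry; exact: triv_all.
by move=> phi psi _ _ z; rewrite (triv_all (phi z)) (triv_all (psi z)).
Qed.

Lemma triv_sub (A : pzAlgType R) (s : algHom A (regular_alg R)) : submersive s.
Proof.
split.
  move=> C D pi _ _ b a _; exists (strHom C); split.
    by move=> y; rewrite (triv_all (pi _)) (triv_all (b y)).
  by move=> x; rewrite (triv_all (strHom C _)) (triv_all (a x)).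
move=> Dg C iota _; split.
  move=> i a b _; exists i, (strHom _); split.
    by move=> y; rewrite (triv_all (iota i _)) (triv_all (b y)).
  exists i, (fd_id i), (fd_id i) => x.
  by rewrite (triv_all (fd_map (fd_id i) _)) [RHS]triv_all.
move=> i j b1 b2 _ _.
have [k [u [v _]]] := ub_ex i j.
by exists k, u, v => y; rewrite (triv_all (fd_map u _)) [RHS]triv_all.
Qed.
End Triv.

Theorem lemma2p12 (R : comPzRingType) :
  exists (AOb : pzAlgType R) (e : AOb) (AIso : pzAlgType R) (f g : AIso),
    represents_Ob e /\ represents_Iso f g /\
    (* the source map Iso_I -> Ob_I, (f,g) |-> gf, is submersive *)
    (forall s : algHom AOb AIso, s e = g * f -> submersive s) /\
    (* the target map Iso_I -> Ob_I, (f,g) |-> fg, is submersive *)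
    (forall t : algHom AOb AIso, t e = f * g -> submersive t) /\
    (* Ob_I -> Spec^nc R is submersive, i.e. R -> AOb is submersive *)
    (forall u : algHom (regular_alg R) AOb, submersive u).
Proof.
case: (eqVneq (1 : R) 0) => [H0|H].
  exists (ObA R), (eO R), (regular_alg R), 0, 0.
  split; first exact: ObA_represents.
  split; first exact: triv_iso.
  split; first by move=> s _; apply: triv_sub.
  split; first by move=> t _; apply: triv_sub.
  by move=> u; split; [exact: fs_u | exact: lfp_u].
exists (ObA R), (eO R), (IsoA H), (fI H), (gI H).
split; first exact: ObA_represents.
split; first exact: IsoA_represents.
split; first by move=> s Hs; split; [exact: fs_s | exact: (@lfp_iso _ H false)].
split; first by move=> t Ht; split; [exact: fs_t | exact: (@lfp_iso _ H true)].
by move=> u; split; [exact: fs_u | exact: lfp_u].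
Qed.
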